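(* Let $\mathbf{C}$ be a category with pullbacks and coequalizers of equivalence relations, and let $U:\mathbf{C}\to\mathbf{Sets}$ be a faithful functor preserving pullbacks and coequalizers of equivalence relations. Let $\mathcal{P}$ be a class of regular epimorphisms in $\mathbf{C}$ such that: (a) $\mathcal{P}$ is pullback stable; (b) whenever $X\overset{f}{\underset{g}{\rightrightarrows}}Y\xrightarrow{h}Z$ is a coequalizer diagram in $\mathbf{C}$ whose $U$-image is exact (i.e. is a coequalizer diagram in $\mathbf{Sets}$ and $(Uf,Ug)$ is the kernel pair of $Uh$), and $f,g\in\mathcal{P}$, then $h\in\mathcal{P}$. Then every morphism in $\mathcal{P}$ is an effective descent morphism in $\mathbf{C}$.
   Context: For a morphism $p:E\to B$ in a category $\mathbf{C}$ with pullbacks, a descent data for $p$ is a triple $(C,\gamma,\xi)$ with $\gamma:C\to E$, $\xi:E\times_BC\to C$ (pullback of $p$ and $p\gamma$, projections $\pi_1,\pi_2$) such that $\gamma\xi=\pi_1$, $\xi\langle\gamma,1_C\rangle=1_C$, $\xi\circ(E\times_B\xi)=\xi\circ(E\times_B\pi_2)$; a morphism $(C,\gamma,\xi)\to(C',\gamma',\xi')$ is $f:C\to C'$ with $\gamma'f=\gamma$ and $f\xi=\xi'\circ(E\times_Bf)$. This gives the category $\mathrm{Des}(p)$ and the comparison functor $K^p:(\mathbf{C}\downarrow B)\to\mathrm{Des}(p)$, $K^p(A,\alpha)=(E\times_BA,\pi_1,E\times_B\pi_2)$. $p$ is an effective descent morphism if $K^p$ is an equivalence of categories. *)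

(* Defs.v *)
Set Implicit Arguments.
Unset Strict Implicit.

Record Category := {
  Ob :> Type;
  Hom : Ob -> Ob -> Type;
  idm : forall A, Hom A A;
  comp : forall A B C, Hom B C -> Hom A B -> Hom A C;
  comp_id_l : forall A B (f : Hom A B), comp (idm B) f = f;
  comp_id_r : forall A B (f : Hom A B), comp f (idm A) = f;
  comp_assoc : forall A B C D (h : Hom C D) (g : Hom B C) (f : Hom A B),
      comp h (comp g f) = comp (comp h g) f
}.
Arguments Hom {c} _ _.
Arguments idm {c} A.
Arguments comp {c A B C} _ _.

Definition SetsCat : Category :=
  {| Ob := Type;
     Hom := fun A B => A -> B;
     idm := fun A (x : A) => x;
     comp := fun A B C (g : B -> C) (f : A -> B) (x : A) => g (f x);
     comp_id_l := fun _ _ _ => eq_refl;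
     comp_id_r := fun _ _ _ => eq_refl;
     comp_assoc := fun _ _ _ _ _ _ _ => eq_refl |}.

Record Functor (C D : Category) := {
  fobj :> C -> D;
  fmap : forall A B : C, Hom A B -> Hom (fobj A) (fobj B);
  fmap_id : forall A : C, fmap (idm A) = idm (fobj A);
  fmap_comp : forall (A B X : C) (g : Hom B X) (f : Hom A B),
      fmap (comp g f) = comp (fmap g) (fmap f)
}.
Arguments fmap {C D} _ {A B} _.

Definition FaithfulFunctor {C D : Category} (F : Functor C D) : Prop :=
  forall (A B : C) (f g : Hom A B), fmap F f = fmap F g -> f = g.

Definition isPullback {C : Category} {A B X P : C}
  (f : Hom A X) (g : Hom B X) (p1 : Hom P A) (p2 : Hom P B) : Prop :=
  comp f p1 = comp g p2 /\
  forall (T : C) (q1 : Hom T A) (q2 : Hom T B), comp f q1 = comp g q2 ->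
    exists! u : Hom T P, comp p1 u = q1 /\ comp p2 u = q2.

Definition isCoequalizer {C : Category} {X Y Z : C}
  (f g : Hom X Y) (h : Hom Y Z) : Prop :=
  comp h f = comp h g /\
  forall (T : C) (k : Hom Y T), comp k f = comp k g ->
    exists! u : Hom Z T, comp u h = k.

(* (r1, r2) : R => X is an (internal) equivalence relation on X:
   jointly monic, and for every T the induced relation on Hom(T,X)
   is reflexive, symmetric and transitive. *)
Definition isEquivRel {C : Category} {R X : C} (r1 r2 : Hom R X) : Prop :=
  (forall (T : C) (a b : Hom T R),
      comp r1 a = comp r1 b -> comp r2 a = comp r2 b -> a = b) /\
  (forall (T : C) (x : Hom T X),
      exists a : Hom T R, comp r1 a = x /\ comp r2 a = x) /\
  (forall (T : C) (a : Hom T R),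
      exists b : Hom T R, comp r1 b = comp r2 a /\ comp r2 b = comp r1 a) /\
  (forall (T : C) (a b : Hom T R), comp r2 a = comp r1 b ->
      exists c : Hom T R, comp r1 c = comp r1 a /\ comp r2 c = comp r2 b).

Definition isRegularEpi {C : Category} {Y Z : C} (h : Hom Y Z) : Prop :=
  exists (X : C) (f g : Hom X Y), isCoequalizer f g h.

Definition HasCoeqOfEquivRels (C : Category) : Prop :=
  forall (R X : C) (r1 r2 : Hom R X), isEquivRel r1 r2 ->
    exists (Z : C) (h : Hom X Z), isCoequalizer r1 r2 h.

Definition PreservesPullbacks {C D : Category} (F : Functor C D) : Prop :=
  forall (A B X P : C) (f : Hom A X) (g : Hom B X) (p1 : Hom P A) (p2 : Hom P B),
    isPullback f g p1 p2 ->
    isPullback (fmap F f) (fmap F g) (fmap F p1) (fmap F p2).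

Definition PreservesCoeqOfEquivRels {C D : Category} (F : Functor C D) : Prop :=
  forall (R X Z : C) (r1 r2 : Hom R X) (h : Hom X Z),
    isEquivRel r1 r2 -> isCoequalizer r1 r2 h ->
    isCoequalizer (fmap F r1) (fmap F r2) (fmap F h).

(* Chosen pullbacks (a "category with pullbacks"), with chosen
   canonical comparison maps. *)
Record PB {C : Category} {A B X : C} (f : Hom A X) (g : Hom B X) := {
  pbOb : C;
  pr1 : Hom pbOb A;
  pr2 : Hom pbOb B;
  pbComm : comp f pr1 = comp g pr2;
  pbLift : forall (T : C) (q1 : Hom T A) (q2 : Hom T B),
      comp f q1 = comp g q2 -> Hom T pbOb
}.
Arguments pbOb {C A B X f g} _.
Arguments pr1 {C A B X f g} _.
Arguments pr2 {C A B X f g} _.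
Arguments pbComm {C A B X f g} _.
Arguments pbLift {C A B X f g} _ {T} q1 q2 _.

Definition Pullbacks (C : Category) : Type :=
  forall (A B X : C) (f : Hom A X) (g : Hom B X), PB f g.

Definition ValidPullbacks {C : Category} (pb : Pullbacks C) : Prop :=
  forall (A B X : C) (f : Hom A X) (g : Hom B X),
    isPullback f g (pr1 (pb A B X f g)) (pr2 (pb A B X f g)) /\
    (forall (T : C) (q1 : Hom T A) (q2 : Hom T B) (H : comp f q1 = comp g q2),
       comp (pr1 (pb A B X f g)) (pbLift (pb A B X f g) q1 q2 H) = q1 /\
       comp (pr2 (pb A B X f g)) (pbLift (pb A B X f g) q1 q2 H) = q2).

Section Descent.
Variables (C : Category) (pb : Pullbacks C) (E B : C) (p : Hom E B).

Definition PBp {D : C} (g : Hom D B) := @pb E D B p g.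

(* raw triple (C, gamma, xi) with xi : E x_B C -> C, where E x_B C is
   the pullback of p and p gamma *)
Record DesObj := {
  dC : C;
  dgam : Hom dC E;
  dxi : Hom (pbOb (PBp (comp p dgam))) dC
}.

(* The maps <gamma,1_C>,
   E x_B xi and E x_B pi2 are written via their defining equations
   (they are the unique maps satisfying them). Here
   E x_B (E x_B C) is the pullback of p and p pi1 (= p gamma pi2). *)
Definition isDescentData (D : DesObj) : Prop :=
  let P1 := PBp (comp p (dgam D)) in
  let P2 := PBp (comp p (pr1 P1)) in
  comp (dgam D) (dxi D) = pr1 P1 /\
  (forall d : Hom (dC D) (pbOb P1),
      comp (pr1 P1) d = dgam D -> comp (pr2 P1) d = idm (dC D) ->
      comp (dxi D) d = idm (dC D)) /\
  (forall m n : Hom (pbOb P2) (pbOb P1),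
      comp (pr1 P1) m = pr1 P2 -> comp (pr2 P1) m = comp (dxi D) (pr2 P2) ->
      comp (pr1 P1) n = pr1 P2 -> comp (pr2 P1) n = comp (pr2 P1) (pr2 P2) ->
      comp (dxi D) m = comp (dxi D) n).

Definition isDesHom (D D' : DesObj) (f : Hom (dC D) (dC D')) : Prop :=
  let P1 := PBp (comp p (dgam D)) in
  let P1' := PBp (comp p (dgam D')) in
  comp (dgam D') f = dgam D /\
  (forall m : Hom (pbOb P1) (pbOb P1'),
      comp (pr1 P1') m = pr1 P1 -> comp (pr2 P1') m = comp f (pr2 P1) ->
      comp f (dxi D) = comp (dxi D') m).

Lemma K_xi_comm (A : C) (al : Hom A B) :
  let P := PBp al in
  let Q := PBp (comp p (pr1 P)) in
  comp p (pr1 Q) = comp al (comp (pr2 P) (pr2 Q)).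
Proof.
  simpl. rewrite (pbComm (PBp (comp p (pr1 (PBp al))))).
  rewrite (pbComm (PBp al)). rewrite <- comp_assoc. reflexivity.
Qed.

(* K^p (A, alpha) = (E x_B A, pi1, E x_B pi2) *)
Definition Kob (A : C) (al : Hom A B) : DesObj :=
  {| dC := pbOb (PBp al);
     dgam := pr1 (PBp al);
     dxi := pbLift (PBp al) (pr1 (PBp (comp p (pr1 (PBp al)))))
              (comp (pr2 (PBp al)) (pr2 (PBp (comp p (pr1 (PBp al))))))
              (K_xi_comm al) |}.

(* f = K^p(a) = E x_B a, i.e. f is the (unique) map with
   pi1 f = pi1 and pi2 f = a pi2. *)
Definition IsKmap (A A' : C) (al : Hom A B) (al' : Hom A' B)
  (a : Hom A A') (f : Hom (pbOb (PBp al)) (pbOb (PBp al'))) : Prop :=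
  comp (pr1 (PBp al')) f = pr1 (PBp al) /\
  comp (pr2 (PBp al')) f = comp a (pr2 (PBp al)).

(* K^p : (C | B) -> Des(p) is an equivalence of categories:
   faithful, full and essentially surjective. *)
Definition K_faithful : Prop :=
  forall (A A' : C) (al : Hom A B) (al' : Hom A' B) (a a' : Hom A A')
         (f : Hom (pbOb (PBp al)) (pbOb (PBp al'))),
    comp al' a = al -> comp al' a' = al ->
    IsKmap a f -> IsKmap a' f -> a = a'.

Definition K_full : Prop :=
  forall (A A' : C) (al : Hom A B) (al' : Hom A' B)
         (f : Hom (pbOb (PBp al)) (pbOb (PBp al'))),
    @isDesHom (Kob al) (Kob al') f ->
    exists a : Hom A A', comp al' a = al /\ IsKmap a f.

Definition K_essSurj : Prop :=
  forall D : DesObj, isDescentData D ->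
    exists (A : C) (al : Hom A B) (f : Hom (dC (Kob al)) (dC D))
           (g : Hom (dC D) (dC (Kob al))),
      @isDesHom (Kob al) D f /\ @isDesHom D (Kob al) g /\
      comp f g = idm (dC D) /\ comp g f = idm (dC (Kob al)).

Definition EffectiveDescent : Prop := K_faithful /\ K_full /\ K_essSurj.

End Descent.
Arguments EffectiveDescent {C} pb {E B} p.

(* Main.v *)
Require Import Defs.
From Stdlib Require Import FunctionalExtensionality PropExtensionality ClassicalEpsilon.
Set Implicit Arguments.
Unset Strict Implicit.

Section Gen.
Variables (C : Category) (U : Functor C SetsCat) (HUfaith : FaithfulFunctor U)
  (HUpb : PreservesPullbacks U).

Definition uf {A B : C} (f : Hom A B) : U A -> U B := fmap U f.

Lemma uf_comp A B X (g : Hom B X) (f : Hom A B) x : uf (comp g f) x = uf g (uf f x).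
Proof. unfold uf. rewrite fmap_comp. reflexivity. Qed.

Lemma uf_id A x : uf (idm A) x = x.
Proof. unfold uf. rewrite fmap_id. reflexivity. Qed.

Lemma uf_inj A B (f g : Hom A B) : (forall x, uf f x = uf g x) -> f = g.
Proof. intro H. apply HUfaith. apply functional_extensionality. exact H. Qed.

Lemma uf_eq A B (f g : Hom A B) x : f = g -> uf f x = uf g x.
Proof. intros ->. reflexivity. Qed.

Lemma isPullback_sym {A B X P : C} (f : Hom A X) (g : Hom B X) (p1 : Hom P A) (p2 : Hom P B) :
  isPullback f g p1 p2 -> isPullback g f p2 p1.
Proof.
  intros [Hc Hu]. split. { symmetry; exact Hc. }
  intros T q1 q2 Hq. destruct (Hu T q2 q1 (eq_sym Hq)) as [u [[H1 H2] Hun]].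
  exists u. split. { split; assumption. }
  intros v [V1 V2]. apply Hun. split; assumption.
Qed.

Section PBel.
Variables (A B X P : C) (f : Hom A X) (g : Hom B X) (p1 : Hom P A) (p2 : Hom P B)
  (H : isPullback f g p1 p2).

Lemma pbU_comm z : uf f (uf p1 z) = uf g (uf p2 z).
Proof. rewrite <- !uf_comp. apply uf_eq. apply H. Qed.

Lemma pbU_ext z z' : uf p1 z = uf p1 z' -> uf p2 z = uf p2 z' -> z = z'.
Proof.
  intros E1 E2. destruct (HUpb H) as [_ Hu].
  destruct (Hu unit (fun _ => uf p1 z) (fun _ => uf p2 z)) as [u [_ Hun]].
  { apply functional_extensionality. intro t. apply pbU_comm. }
  assert (a1 : u = (fun _ => z)). { apply Hun. split; reflexivity. }
  assert (a2 : u = (fun _ => z')). { apply Hun. split; apply functional_extensionality; intro t; cbn; symmetry; assumption. }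
  change z with ((fun _ : unit => z) tt). rewrite <- a1, a2. reflexivity.
Qed.

Lemma pbU_ex a b : uf f a = uf g b -> exists z, uf p1 z = a /\ uf p2 z = b.
Proof.
  intros E. destruct (HUpb H) as [_ Hu].
  destruct (Hu unit (fun _ => a) (fun _ => b)) as [u [[U1 U2] _]].
  { apply functional_extensionality. intro t. exact E. }
  exists (u tt). split.
  - change a with ((fun _ : unit => a) tt). rewrite <- U1. reflexivity.
  - change b with ((fun _ : unit => b) tt). rewrite <- U2. reflexivity.
Qed.
End PBel.

Lemma repi_epi {Y Z} (h : Hom Y Z) : isRegularEpi h ->
  forall (T : C) (a b : Hom Z T), comp a h = comp b h -> a = b.
Proof.
  intros [X [f [g [Hc Hu]]]] T a b Hab.
  destruct (Hu T (comp a h)) as [u [_ Hun]].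
  { rewrite <- !comp_assoc, Hc. reflexivity. }
  transitivity u. { symmetry; apply Hun; reflexivity. }
  apply Hun. symmetry; exact Hab.
Qed.

Lemma repi_desc {Y Z T} (h : Hom Y Z) (k : Hom Y T) : isRegularEpi h ->
  (forall y y', uf h y = uf h y' -> uf k y = uf k y') -> exists u, comp u h = k.
Proof.
  intros [X [f [g [Hc Hu]]]] Hk.
  destruct (Hu T k) as [u [Hu1 _]].
  { apply uf_inj. intro x. rewrite !uf_comp. apply Hk. rewrite <- !uf_comp. apply uf_eq. exact Hc. }
  exists u; exact Hu1.
Qed.

Lemma coeq_surj {X Y Z : C} (f g : Hom X Y) (h : Hom Y Z) :
  isCoequalizer (fmap U f) (fmap U g) (fmap U h) -> forall z, exists y, uf h y = z.
Proof.
  intros [Hc Hu] z.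
  destruct (Hu Prop (fun _ => True)) as [u [_ Hun]]. { reflexivity. }
  assert (a1 : u = (fun _ => True)) by (apply Hun; reflexivity).
  assert (a2 : u = (fun z => exists y, uf h y = z)).
  { apply Hun. apply functional_extensionality. intro y. cbn.
    apply propositional_extensionality. split; [intros; exact I| intros _; exists y; reflexivity]. }
  assert (Hz := f_equal (fun F => F z) (eq_trans (eq_sym a1) a2)).
  cbn in Hz. rewrite <- Hz. exact I.
Qed.

End Gen.

Section Desc.
Variables (C : Category) (U : Functor C SetsCat) (HUfaith : FaithfulFunctor U)
  (HUpb : PreservesPullbacks U) (pb : Pullbacks C) (Hpb : ValidPullbacks pb)
  (E B : C) (p : Hom E B).

Notation uf := (@uf C U).
Notation Q al := (PBp pb p al).

Lemma Qpb {A : C} (al : Hom A B) : isPullback p al (pr1 (Q al)) (pr2 (Q al)).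
Proof. exact (proj1 (@Hpb E A B p al)). Qed.

Lemma Qcomm {A : C} (al : Hom A B) z : uf p (uf (pr1 (Q al)) z) = uf al (uf (pr2 (Q al)) z).
Proof. exact (pbU_comm (Qpb al) z). Qed.

Lemma Qext {A : C} (al : Hom A B) z z' :
  uf (pr1 (Q al)) z = uf (pr1 (Q al)) z' -> uf (pr2 (Q al)) z = uf (pr2 (Q al)) z' -> z = z'.
Proof. apply (pbU_ext HUpb (Qpb al)). Qed.

Lemma Qex {A : C} (al : Hom A B) e a : uf p e = uf al a ->
  exists z, uf (pr1 (Q al)) z = e /\ uf (pr2 (Q al)) z = a.
Proof. apply (pbU_ex HUpb (Qpb al)). Qed.

Lemma Ql1 {A T : C} (al : Hom A B) (q1 : Hom T E) (q2 : Hom T A) Hq t :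
  uf (pr1 (Q al)) (uf (pbLift (Q al) q1 q2 Hq) t) = uf q1 t.
Proof. rewrite <- uf_comp. apply uf_eq. exact (proj1 (proj2 (@Hpb E A B p al) T q1 q2 Hq)). Qed.

Lemma Ql2 {A T : C} (al : Hom A B) (q1 : Hom T E) (q2 : Hom T A) Hq t :
  uf (pr2 (Q al)) (uf (pbLift (Q al) q1 q2 Hq) t) = uf q2 t.
Proof. rewrite <- uf_comp. apply uf_eq. exact (proj2 (proj2 (@Hpb E A B p al) T q1 q2 Hq)). Qed.

Lemma Kxi1 {A : C} (al : Hom A B) w :
  uf (pr1 (Q al)) (uf (dxi (Kob pb p al)) w) = uf (pr1 (Q (comp p (pr1 (Q al))))) w.
Proof. apply Ql1. Qed.

Lemma Kxi2 {A : C} (al : Hom A B) w :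
  uf (pr2 (Q al)) (uf (dxi (Kob pb p al)) w) = uf (pr2 (Q al)) (uf (pr2 (Q (comp p (pr1 (Q al))))) w).
Proof. unfold Kob. cbn [dxi]. etransitivity; [apply Ql2|]. apply uf_comp. Qed.

Lemma Kfaith (Hreg : forall (A : C) (al : Hom A B), isRegularEpi (pr2 (Q al))) :
  K_faithful pb p.
Proof.
  intros A A' al al' a a' f _ _ [F1 F2] [G1 G2].
  apply (repi_epi (Hreg A al)). rewrite <- F2, G2. reflexivity.
Qed.

Lemma Kfull (Hreg : forall (A : C) (al : Hom A B), isRegularEpi (pr2 (Q al))) :
  K_full pb p.
Proof.
  intros A A' al al' f [Hf1 Hf2]. cbn [dgam Kob] in Hf1.
  assert (Hf1e : forall z, uf (pr1 (Q al')) (uf f z) = uf (pr1 (Q al)) z).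
  { intro z. rewrite <- uf_comp. apply uf_eq. exact Hf1. }
  set (P2 := Q (comp p (pr1 (Q al)))).
  assert (Hm : comp p (pr1 P2) = comp (comp p (pr1 (Q al'))) (comp f (pr2 P2))).
  { apply (uf_inj HUfaith). intro w. rewrite !uf_comp, Hf1e.
    rewrite (Qcomm (al:=comp p (pr1 (Q al)))). apply uf_comp. }
  set (m := pbLift (Q (comp p (pr1 (Q al')))) (pr1 P2) (comp f (pr2 P2)) Hm).
  assert (Hfm := Hf2 m (proj1 (proj2 (@Hpb _ _ _ _ _) _ _ _ Hm)) (proj2 (proj2 (@Hpb _ _ _ _ _) _ _ _ Hm))).
  assert (Key : forall z z', uf (pr2 (Q al)) z = uf (pr2 (Q al)) z' ->
             uf (comp (pr2 (Q al')) f) z = uf (comp (pr2 (Q al')) f) z').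
  { intros z z' Hzz.
    destruct (Qex (al:=comp p (pr1 (Q al))) (e:=uf (pr1 (Q al)) z) (a:=z')) as [w [W1 W2]].
    { rewrite uf_comp, !Qcomm, Hzz. reflexivity. }
    assert (Hw : uf (dxi (Kob pb p al)) w = z).
    { apply (Qext (al:=al)). - rewrite Kxi1. exact W1. - rewrite Kxi2. transitivity (uf (pr2 (Q al)) z'); [f_equal; exact W2 | symmetry; exact Hzz]. }
    rewrite <- Hw. rewrite !uf_comp. rewrite <- (uf_comp f).
    transitivity (uf (pr2 (Q al')) (uf (comp (dxi (Kob pb p al')) m) w)).
    { f_equal. exact (uf_eq w Hfm). }
    transitivity (uf (pr2 (Q al')) (uf (pr2 (Q (comp p (pr1 (Q al'))))) (uf m w))).
    { rewrite uf_comp. apply Kxi2. }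
    f_equal. unfold m. etransitivity; [apply Ql2|]. rewrite uf_comp. f_equal. exact W2. }
  destruct (repi_desc HUfaith (Hreg A al) Key) as [a Ha].
  exists a. split.
  - apply (repi_epi (Hreg A al)). apply (uf_inj HUfaith). intro z.
    rewrite !uf_comp. rewrite <- (uf_comp a), (uf_eq z Ha), uf_comp.
    rewrite <- Qcomm, Hf1e, Qcomm. reflexivity.
  - split. + exact Hf1. + symmetry; exact Ha.
Qed.


Notation P1_ g := (Q (comp p g)).
Notation pi1_ g := (pr1 (Q (comp p g))).
Notation pi2_ g := (pr2 (Q (comp p g))).
Lemma Kess
  (Hcoeq : HasCoeqOfEquivRels C)
  (HUcoeq : PreservesCoeqOfEquivRels U)
  (P : forall (A B : C), Hom A B -> Prop)
  (HPreg : forall (A B : C) (h : Hom A B), P A B h -> isRegularEpi h)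
  (HPstab : forall (A B A' Q : C) (p : Hom A B) (g : Hom A' B)
                   (q1 : Hom Q A') (q2 : Hom Q A),
      P A B p -> isPullback g p q1 q2 -> P Q A' q1)
  (HPcoeq : forall (X Y Z : C) (f g : Hom X Y) (h : Hom Y Z),
      isCoequalizer f g h ->
      isCoequalizer (fmap U f) (fmap U g) (fmap U h) ->
      isPullback (fmap U h) (fmap U h) (fmap U f) (fmap U g) ->
      P X Y f -> P X Y g -> P Y Z h)
  (Pp : P E B p) : K_essSurj pb p.
Proof.
  intros [C0 g x] HD. unfold isDescentData in HD. cbn [dgam dxi dC] in *.
  destruct HD as [HD1 [HD2 HD3]].
  assert (D1 : forall r, uf g (uf x r) = uf (pi1_ g) r).
  { intro r. rewrite <- uf_comp. apply uf_eq. exact HD1. }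
  assert (Hd : comp p g = comp (comp p g) (idm C0)) by (symmetry; apply comp_id_r).
  set (d := pbLift (P1_ g) g (idm C0) Hd).
  assert (Hd1 : comp (pi1_ g) d = g) by exact (proj1 (proj2 (@Hpb _ _ _ _ _) _ _ _ Hd)).
  assert (Hd2 : comp (pi2_ g) d = idm C0) by exact (proj2 (proj2 (@Hpb _ _ _ _ _) _ _ _ Hd)).
  assert (HxD : comp x d = idm C0) by (apply HD2; assumption).
  assert (PC : forall r, uf p (uf (pi1_ g) r) = uf p (uf g (uf (pi2_ g) r))).
  { intro r. rewrite <- (uf_comp p g). apply Qcomm. }
  assert (PG : forall r, uf p (uf g (uf x r)) = uf p (uf g (uf (pi2_ g) r))).
  { intro r. rewrite D1. apply PC. }
  assert (D2 : forall r, uf (pi1_ g) r = uf g (uf (pi2_ g) r) -> uf x r = uf (pi2_ g) r).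
  { intros r Hr.
    assert (Er : r = uf d (uf (pi2_ g) r)).
    { apply (Qext (al:=comp p g)).
      - unfold d. rewrite Ql1. exact Hr.
      - unfold d. rewrite Ql2. rewrite uf_id. reflexivity. }
    rewrite Er at 1. rewrite <- uf_comp, HxD, uf_id. reflexivity. }
  assert (D3 : forall r1 r2 r3, uf (pi1_ g) r1 = uf (pi1_ g) r3 -> uf (pi2_ g) r1 = uf x r2 ->
                 uf (pi2_ g) r3 = uf (pi2_ g) r2 -> uf x r1 = uf x r3).
  { intros r1 r2 r3 H13 H12 H32.
    assert (Hm1 : comp p (pr1 (Q (comp p (pi1_ g)))) = comp (comp p g) (comp x (pr2 (Q (comp p (pi1_ g)))))).
    { apply (uf_inj HUfaith). intro w. rewrite !uf_comp. rewrite D1.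
      rewrite <- (uf_comp p (pi1_ g)). apply Qcomm. }
    assert (Hn1 : comp p (pr1 (Q (comp p (pi1_ g)))) = comp (comp p g) (comp (pi2_ g) (pr2 (Q (comp p (pi1_ g)))))).
    { apply (uf_inj HUfaith). intro w. rewrite !uf_comp. rewrite <- PC.
      rewrite <- (uf_comp p (pi1_ g)). apply Qcomm. }
    set (m := pbLift (P1_ g) (pr1 (Q (comp p (pi1_ g)))) (comp x (pr2 (Q (comp p (pi1_ g))))) Hm1).
    set (n := pbLift (P1_ g) (pr1 (Q (comp p (pi1_ g)))) (comp (pi2_ g) (pr2 (Q (comp p (pi1_ g))))) Hn1).
    assert (Hmn : comp x m = comp x n).
    { apply HD3.
      - exact (proj1 (proj2 (@Hpb _ _ _ _ _) _ _ _ Hm1)).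
      - exact (proj2 (proj2 (@Hpb _ _ _ _ _) _ _ _ Hm1)).
      - exact (proj1 (proj2 (@Hpb _ _ _ _ _) _ _ _ Hn1)).
      - exact (proj2 (proj2 (@Hpb _ _ _ _ _) _ _ _ Hn1)). }
    destruct (Qex (al:=comp p (pi1_ g)) (e:=uf (pi1_ g) r1) (a:=r2)) as [w [W1 W2]].
    { rewrite uf_comp, PC, H12, PG, <- PC. reflexivity. }
    assert (Em : uf m w = r1).
    { apply (Qext (al:=comp p g)).
      - unfold m. rewrite Ql1. exact W1.
      - unfold m. rewrite Ql2, uf_comp, W2. symmetry; exact H12. }
    assert (En : uf n w = r3).
    { apply (Qext (al:=comp p g)).
      - unfold n. rewrite Ql1. rewrite W1. exact H13.
      - unfold n. rewrite Ql2, uf_comp, W2. symmetry; exact H32. }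
    rewrite <- Em, <- En, <- !uf_comp. apply uf_eq. exact Hmn. }
  assert (JI : forall r r', uf x r = uf x r' -> uf (pi2_ g) r = uf (pi2_ g) r' -> r = r').
  { intros r r' H1 H2. apply (Qext (al:=comp p g)); [|exact H2].
    rewrite <- !D1, H1. reflexivity. }
  assert (Hs : comp p (comp g (pi2_ g)) = comp (comp p g) x).
  { apply (uf_inj HUfaith). intro r. rewrite !uf_comp. symmetry; apply PG. }
  set (sg := pbLift (P1_ g) (comp g (pi2_ g)) x Hs).
  assert (Sg1 : forall r, uf (pi1_ g) (uf sg r) = uf g (uf (pi2_ g) r)).
  { intro r. unfold sg. rewrite Ql1. apply uf_comp. }
  assert (Sg2 : forall r, uf (pi2_ g) (uf sg r) = uf x r).
  { intro r. unfold sg. rewrite Ql2. reflexivity. }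
  assert (Xsg : forall r, uf x (uf sg r) = uf (pi2_ g) r).
  { intro r. rewrite (D3 (uf sg r) r (uf d (uf (pi2_ g) r))).
    - rewrite <- uf_comp, HxD, uf_id. reflexivity.
    - rewrite Sg1. unfold d. rewrite Ql1. reflexivity.
    - apply Sg2.
    - unfold d. rewrite Ql2, uf_id. reflexivity. }
  assert (SS : forall r, uf sg (uf sg r) = r).
  { intro r. apply (Qext (al:=comp p g)).
    - rewrite Sg1, Sg2, D1. reflexivity.
    - rewrite Sg2, Xsg. reflexivity. }
  pose (Rel := fun c c' => exists r, uf x r = c /\ uf (pi2_ g) r = c').
  assert (Rrefl : forall c, Rel c c).
  { intro c. exists (uf d c). split.
    - rewrite <- uf_comp, HxD, uf_id. reflexivity.
    - rewrite <- uf_comp, Hd2, uf_id. reflexivity. }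
  assert (Rsym : forall c c', Rel c c' -> Rel c' c).
  { intros c c' [r [R1 R2]]. exists (uf sg r). split.
    - rewrite Xsg. exact R2.
    - rewrite Sg2. exact R1. }
  assert (Rtrans : forall a b c, Rel a b -> Rel b c -> Rel a c).
  { intros a b c [r1 [R11 R12]] [r2 [R21 R22]].
    destruct (Qex (al:=comp p g) (e:=uf (pi1_ g) r1) (a:=c)) as [r3 [R31 R32]].
    { rewrite PC, uf_comp, R12, <- R21, PG, R22. reflexivity. }
    exists r3. split; [|exact R32].
    rewrite <- R11. symmetry. apply (D3 r1 r2 r3).
    - rewrite R31. reflexivity.
    - rewrite R12. symmetry; exact R21.
    - rewrite R32. symmetry; exact R22. }
  assert (Heq : isEquivRel x (pi2_ g)).
  { split; [|split; [|split]].
    - intros T a b Ha Hb. apply (uf_inj HUfaith). intro t. apply JI.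
      + rewrite <- !uf_comp. apply uf_eq. exact Ha.
      + rewrite <- !uf_comp. apply uf_eq. exact Hb.
    - intros T y. exists (comp d y). split.
      + rewrite comp_assoc, HxD. apply comp_id_l.
      + rewrite comp_assoc, Hd2. apply comp_id_l.
    - intros T a. exists (comp sg a). split.
      + apply (uf_inj HUfaith). intro t. rewrite !uf_comp. apply Xsg.
      + apply (uf_inj HUfaith). intro t. rewrite !uf_comp. apply Sg2.
    - intros T a b Hab.
      assert (Hc : comp p (comp (pi1_ g) a) = comp (comp p g) (comp (pi2_ g) b)).
      { apply (uf_inj HUfaith). intro t. rewrite !uf_comp. rewrite PC.
        rewrite <- (uf_comp (pi2_ g) a), (uf_eq t Hab), uf_comp, PG. reflexivity. }
      exists (pbLift (P1_ g) (comp (pi1_ g) a) (comp (pi2_ g) b) Hc). split.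
      + apply (uf_inj HUfaith). intro t. rewrite !uf_comp. symmetry. apply (D3 (uf a t) (uf b t)).
        * rewrite Ql1, uf_comp. reflexivity.
        * rewrite <- !uf_comp. apply uf_eq. exact Hab.
        * rewrite Ql2, uf_comp. reflexivity.
      + exact (proj2 (proj2 (@Hpb _ _ _ _ _) _ _ _ Hc)). }
  destruct (Hcoeq _ _ _ _ Heq) as [A [h Hh]].
  pose proof Hh as [Hhc Hhu].
  assert (Hhe : forall r, uf h (uf x r) = uf h (uf (pi2_ g) r)).
  { intro r. rewrite <- !uf_comp. apply uf_eq. exact Hhc. }
  destruct (Hhu B (comp p g)) as [al [Hal _]].
  { apply (uf_inj HUfaith). intro r. rewrite !uf_comp. apply PG. }
  assert (Hale : forall c, uf al (uf h c) = uf p (uf g c)).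
  { intro c. rewrite <- !uf_comp. apply uf_eq. exact Hal. }
  assert (HUh := HUcoeq _ _ _ _ _ _ Heq Hh).
  assert (Hex : forall c c', uf h c = uf h c' -> Rel c c').
  { intros c c' Hcc. destruct HUh as [_ Hu].
    destruct (Hu (U C0 -> Prop) (fun c z => Rel z c)) as [u [Hu1 _]].
    { apply functional_extensionality. intro r. apply functional_extensionality. intro z.
      cbn. apply propositional_extensionality. split.
      - intro H1. apply (Rtrans _ _ _ H1). exists r. split; reflexivity.
      - intro H1. apply (Rtrans _ _ _ H1). apply Rsym. exists r. split; reflexivity. }
    assert (K1 := f_equal (fun F => F c) Hu1). assert (K2 := f_equal (fun F => F c') Hu1).
    cbn in K1, K2. fold (uf h c) in K1. fold (uf h c') in K2.
    rewrite Hcc in K1. rewrite K1 in K2.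
    assert (K3 : Rel c c = Rel c c') by exact (f_equal (fun F => F c) K2). rewrite <- K3. apply Rrefl. }
  assert (Ppi2 : P _ _ (pi2_ g)).
  { exact (HPstab _ _ _ _ p (comp p g) (pi2_ g) (pi1_ g) Pp (isPullback_sym (Qpb (comp p g)))). }
  assert (Px : P _ _ x).
  { apply (HPstab _ _ _ _ (pi2_ g) (idm C0) x sg Ppi2). split.
    - apply (uf_inj HUfaith). intro r. rewrite !uf_comp, uf_id, Sg2. reflexivity.
    - intros T q1 q2 Hq. exists (comp sg q2). split; [split|].
      + apply (uf_inj HUfaith). intro t. rewrite !uf_comp, Xsg.
        rewrite <- uf_comp, <- (uf_eq t Hq), uf_comp, uf_id. reflexivity.
      + apply (uf_inj HUfaith). intro t. rewrite !uf_comp, SS. reflexivity.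
      + intros v [V1 V2]. apply (uf_inj HUfaith). intro t.
        rewrite uf_comp, <- V2, uf_comp, SS. reflexivity. }
  assert (Hexact : isPullback (fmap U h) (fmap U h) (fmap U x) (fmap U (pi2_ g))).
  { split.
    - rewrite <- !fmap_comp, Hhc. reflexivity.
    - intros T q1 q2 Hq.
      assert (Hq' : forall t, uf h (q1 t) = uf h (q2 t)) by (intro t; exact (f_equal (fun F => F t) Hq)).
      exists (fun t => proj1_sig (constructive_indefinite_description _ (Hex _ _ (Hq' t)))).
      split; [split|].
      + apply functional_extensionality. intro t. cbn.
        destruct (constructive_indefinite_description _ _) as [r [R1 R2]]. exact R1.
      + apply functional_extensionality. intro t. cbn.
        destruct (constructive_indefinite_description _ _) as [r [R1 R2]]. exact R2.
      + intros v [V1 V2]. apply functional_extensionality. intro t.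
        destruct (constructive_indefinite_description _ _) as [r [R1 R2]]. cbn.
        apply JI.
        * rewrite R1. exact (f_equal (fun F => F t) (eq_sym V1)).
        * rewrite R2. exact (f_equal (fun F => F t) (eq_sym V2)). }
  assert (Ph : P _ _ h) by exact (HPcoeq _ _ _ _ _ _ Hh HUh Hexact Px Ppi2).
  assert (Hsurj := coeq_surj HUh).
  assert (Hj : comp p (pi1_ g) = comp al (comp h (pi2_ g))).
  { apply (uf_inj HUfaith). intro r. rewrite !uf_comp, Hale. apply PC. }
  set (j := pbLift (Q al) (pi1_ g) (comp h (pi2_ g)) Hj).
  assert (J1 : forall r, uf (pr1 (Q al)) (uf j r) = uf (pi1_ g) r).
  { intro r. unfold j. rewrite Ql1. reflexivity. }
  assert (J2 : forall r, uf (pr2 (Q al)) (uf j r) = uf h (uf (pi2_ g) r)).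
  { intro r. unfold j. rewrite Ql2. apply uf_comp. }
  assert (Pj : P _ _ j).
  { apply (HPstab _ _ _ _ h (pr2 (Q al)) j (pi2_ g) Ph). split.
    - apply (uf_inj HUfaith). intro r. rewrite !uf_comp. apply J2.
    - intros T q1 q2 Hq.
      assert (Hq' : forall t, uf (pr2 (Q al)) (uf q1 t) = uf h (uf q2 t)).
      { intro t. rewrite <- !uf_comp. apply uf_eq. exact Hq. }
      assert (Hu : comp p (comp (pr1 (Q al)) q1) = comp (comp p g) q2).
      { apply (uf_inj HUfaith). intro t. rewrite !uf_comp, Qcomm, Hq', Hale. reflexivity. }
      exists (pbLift (P1_ g) (comp (pr1 (Q al)) q1) q2 Hu). split; [split|].
      + apply (uf_inj HUfaith). intro t. rewrite uf_comp. apply (Qext (al:=al)).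
        * rewrite J1, Ql1, uf_comp. reflexivity.
        * rewrite J2, Ql2, Hq'. reflexivity.
      + exact (proj2 (proj2 (@Hpb _ _ _ _ _) _ _ _ Hu)).
      + intros v [V1 V2]. apply (uf_inj HUfaith). intro t. apply (Qext (al:=comp p g)).
        * rewrite Ql1, uf_comp, <- V1, uf_comp, J1. reflexivity.
        * rewrite Ql2, <- V2, uf_comp. reflexivity. }
  assert (Rj := HPreg _ _ j Pj).
  assert (Jsurj : forall q, exists r, uf j r = q).
  { intro q. destruct (Hsurj (uf (pr2 (Q al)) q)) as [c Hc].
    destruct (Qex (al:=comp p g) (e:=uf (pr1 (Q al)) q) (a:=c)) as [r [R1 R2]].
    { rewrite Qcomm, <- Hc, Hale, uf_comp. reflexivity. }
    exists r. apply (Qext (al:=al)).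
    - rewrite J1. exact R1.
    - rewrite J2, R2. exact Hc. }
  destruct (repi_desc HUfaith Rj (k:=x)) as [fK HfK].
  { intros r r' Hrr.
    assert (E1 : uf (pi1_ g) r = uf (pi1_ g) r') by (rewrite <- !J1, Hrr; reflexivity).
    assert (E2 : uf h (uf (pi2_ g) r) = uf h (uf (pi2_ g) r')) by (rewrite <- !J2, Hrr; reflexivity).
    destruct (Hex _ _ E2) as [r0 [R01 R02]].
    apply (D3 r r0 r'); [exact E1 | symmetry; exact R01 | symmetry; exact R02]. }
  assert (Fj : forall r, uf fK (uf j r) = uf x r).
  { intro r. rewrite <- uf_comp. apply uf_eq. exact HfK. }
  assert (Hg : comp p g = comp al h) by (symmetry; exact Hal).
  set (gK := pbLift (Q al) g h Hg).
  assert (G1 : forall c, uf (pr1 (Q al)) (uf gK c) = uf g c).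
  { intro c. unfold gK. rewrite Ql1. reflexivity. }
  assert (G2 : forall c, uf (pr2 (Q al)) (uf gK c) = uf h c).
  { intro c. unfold gK. rewrite Ql2. reflexivity. }
  assert (Gd : forall c, uf gK c = uf j (uf d c)).
  { intro c. apply (Qext (al:=al)).
    - rewrite G1, J1. unfold d. rewrite Ql1. reflexivity.
    - rewrite G2, J2. unfold d. rewrite Ql2, uf_id. reflexivity. }
  assert (GFj : forall r, uf gK (uf x r) = uf j r).
  { intro r. apply (Qext (al:=al)).
    - rewrite G1, J1, D1. reflexivity.
    - rewrite G2, J2, Hhe. reflexivity. }
  exists A, al, fK, gK. split; [|split; [|split]].
  - split.
    + cbn [dgam Kob]. apply (repi_epi Rj). apply (uf_inj HUfaith). intro r.
      rewrite !uf_comp, Fj, D1, J1. reflexivity.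
    + cbn [dgam dxi dC Kob]. intros m M1 M2.
      assert (M1e : forall w, uf (pi1_ g) (uf m w) = uf (pr1 (Q (comp p (pr1 (Q al))))) w).
      { intro w. rewrite <- uf_comp. apply uf_eq. exact M1. }
      assert (M2e : forall w, uf (pi2_ g) (uf m w) = uf fK (uf (pr2 (Q (comp p (pr1 (Q al))))) w)).
      { intro w. rewrite <- !uf_comp. apply uf_eq. exact M2. }
      apply (uf_inj HUfaith). intro w. rewrite !uf_comp.
      destruct (Jsurj (uf (pr2 (Q (comp p (pr1 (Q al))))) w)) as [r Hr].
      destruct (Qex (al:=comp p g) (e:=uf (pr1 (Q (comp p (pr1 (Q al))))) w) (a:=uf (pi2_ g) r)) as [r' [R1 R2]].
      { rewrite Qcomm, uf_comp, <- Hr, J1, PC, uf_comp. reflexivity. }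
      assert (Hxi : uf (dxi (Kob pb p al)) w = uf j r').
      { apply (Qext (al:=al)).
        - etransitivity; [apply Kxi1|]. rewrite J1, R1. reflexivity.
        - etransitivity; [apply Kxi2|]. rewrite J2, R2, <- Hr, J2. reflexivity. }
      transitivity (uf fK (uf j r')). { f_equal. exact Hxi. }
      rewrite Fj. symmetry. apply (D3 (uf m w) r r').
      * rewrite M1e, R1. reflexivity.
      * rewrite M2e, <- Hr, Fj. reflexivity.
      * exact R2.
  - split.
    + cbn [dgam Kob]. apply (uf_inj HUfaith). intro c. rewrite uf_comp. apply G1.
    + cbn [dgam dxi dC Kob]. intros m M1 M2.
      assert (M1e : forall r, uf (pr1 (Q (comp p (pr1 (Q al))))) (uf m r) = uf (pi1_ g) r).
      { intro r. rewrite <- uf_comp. apply uf_eq. exact M1. }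
      assert (M2e : forall r, uf (pr2 (Q (comp p (pr1 (Q al))))) (uf m r) = uf gK (uf (pi2_ g) r)).
      { intro r. rewrite <- !uf_comp. apply uf_eq. exact M2. }
      apply (uf_inj HUfaith). intro r. rewrite !uf_comp. apply (Qext (al:=al)).
      * rewrite G1, D1. etransitivity; [|symmetry; apply Ql1]. symmetry. apply M1e.
      * rewrite G2. etransitivity; [|symmetry; apply Ql2]. rewrite uf_comp, M2e, G2. apply Hhe.
  - cbn [dC Kob]. apply (uf_inj HUfaith). intro c. rewrite uf_comp, uf_id, Gd, Fj.
    rewrite <- uf_comp, HxD, uf_id. reflexivity.
  - cbn [dC Kob]. apply (repi_epi Rj). apply (uf_inj HUfaith). intro r.
    rewrite !uf_comp, uf_id, Fj, GFj. reflexivity.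
Qed.

End Desc.
Theorem theorem6p1
  (C : Category) (pb : Pullbacks C) (Hpb : ValidPullbacks pb)
  (Hcoeq : HasCoeqOfEquivRels C)
  (U : Functor C SetsCat)
  (HUfaith : FaithfulFunctor U)
  (HUpb : PreservesPullbacks U)
  (HUcoeq : PreservesCoeqOfEquivRels U)
  (P : forall (A B : C), Hom A B -> Prop)
  (HPreg : forall (A B : C) (h : Hom A B), P A B h -> isRegularEpi h)
  (HPstab : forall (A B A' Q : C) (p : Hom A B) (g : Hom A' B)
                   (q1 : Hom Q A') (q2 : Hom Q A),
      P A B p -> isPullback g p q1 q2 -> P Q A' q1)
  (HPcoeq : forall (X Y Z : C) (f g : Hom X Y) (h : Hom Y Z),
      isCoequalizer f g h ->
      isCoequalizer (fmap U f) (fmap U g) (fmap U h) ->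
      isPullback (fmap U h) (fmap U h) (fmap U f) (fmap U g) ->
      P X Y f -> P X Y g -> P Y Z h) :
  forall (E B : C) (p : Hom E B), P E B p -> EffectiveDescent pb p.
Proof.
  intros E B p Pp.
  assert (Hreg : forall (A : C) (al : Hom A B), isRegularEpi (pr2 (PBp pb p al))).
  { intros A al. apply (HPreg _ _ _ (HPstab _ _ _ _ p al _ _ Pp (isPullback_sym (Qpb Hpb p al)))). }
  split; [|split].
  - exact (Kfaith Hreg).
  - exact (Kfull HUfaith HUpb Hpb Hreg).
  - exact (Kess HUfaith HUpb Hpb Hcoeq HUcoeq HPreg HPstab HPcoeq Pp).
Qed.
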